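(* Consider problem (III) with $n$ datum shapes $D_i\in\mathbb{R}^{d\times m}$ ($d\in\{2,3\}$), visibility matrices $\Gamma_i$, fixed diagonal $\Lambda$ and fixed $\nu\ge0$, where each warp is either the affine transformation (feature map $\beta(p)=[p^{\top},1]^{\top}$, $\mu_i=0$) or a TPS warp (with $\mu_i\ge0$), and the matrices $\mathcal{B}_i(D_i)\Gamma_i\Gamma_i\mathcal{B}_i(D_i)^{\top}+\mu_iZ_i^{\top}Z_i$ are invertible. If each datum shape is replaced by $D_i'=R_iD_i+t_i\mathbf{1}^{\top}$ for arbitrary (possibly distinct) rotations $R_i$ and translations $t_i$, where for a TPS warp its control centers are transformed by the same $(R_i,t_i)$, then the optimal reference shape $S$ of problem (III) remains the same.
   Context: Problem (III): $$\min_{W_i,\,S\in\mathbb{R}^{d\times m}}\ \sum_{i=1}^n\|W_i^{\top}\mathcal{B}_i(D_i)\Gamma_i-S\Gamma_i\|_F^2+\sum_{i=1}^n\mu_i\|Z_iW_i\|_F^2+\nu\|S\mathbf{1}\|_2^2\quad\text{s.t.}\quad SS^{\top}=\Lambda,$$ where $\Gamma_i$ is diagonal with entries in $\{0,1\}$, $\mathcal{B}_i(D)=[\beta_i(p_1),\dots,\beta_i(p_m)]$ for $D=[p_1,\dots,p_m]$ and $\mathbf{1}\in\mathbb{R}^m$ is the all-ones vector. TPS warp: control centers $c_1,\dots,c_l\in\mathbb{R}^d$, parameter $\lambda$, kernel $\phi(r)=r^2\log(r^2)$ ($d=2$) or $-|r|$ ($d=3$); $K_\lambda$ has diagonal $\lambda$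 and off-diagonal entries $\phi(\|c_j-c_k\|)$; $\tilde{C}=[\tilde{c}_1,\dots,\tilde{c}_l]$, $\tilde{c}_j=[c_j^{\top},1]^{\top}$; $K_\lambda$, $\tilde{C}K_\lambda^{-1}\tilde{C}^{\top}$ invertible; $\bar{\mathcal{E}}_\lambda=K_\lambda^{-1}-K_\lambda^{-1}\tilde{C}^{\top}(\tilde{C}K_\lambda^{-1}\tilde{C}^{\top})^{-1}\tilde{C}K_\lambda^{-1}$ (positive semidefinite in the paper's setting); $\mathcal{E}_\lambda=\begin{bmatrix}\bar{\mathcal{E}}_\lambda\\ (\tilde{C}K_\lambda^{-1}\tilde{C}^{\top})^{-1}\tilde{C}K_\lambda^{-1}\end{bmatrix}$; $\beta(p)=\mathcal{E}_\lambda^{\top}\begin{bmatrix}\phi_p\\ \tilde{p}\end{bmatrix}$, $\phi_p=[\phi(\|p-c_j\|)]_j$, $\tilde{p}=[p^{\top},1]^{\top}$; $Z=\sqrt{\bar{\mathcal{E}}_\lambda}$. *)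

(* Defs.v *)
From HB Require Import structures.
From mathcomp Require Import all_boot all_order all_algebra.
From mathcomp Require Import reals exp.
Set Implicit Arguments. Unset Strict Implicit. Unset Printing Implicit Defensive.
Import Order.TTheory GRing.Theory Num.Theory.
Local Open Scope ring_scope.

Section Defs.
Variable R : realType.
Variable d : nat.

Definition vnorm (v : 'cV[R]_d) : R := Num.sqrt (\sum_(k < d) v k 0 ^+ 2).

Definition frob2 (p q : nat) (A : 'M[R]_(p, q)) : R :=
  \sum_(i < p) \sum_(j < q) A i j ^+ 2.

(* TPS kernel: r^2 log(r^2) for d = 2, -|r| for d = 3.
   (ln 0 = 0 in MathComp-Analysis, matching the usual convention phi(0)=0.) *)
Definition tps_phi (r : R) : R :=
  if d == 2%N then r ^+ 2 * ln (r ^+ 2) else - `|r|.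

(* A warp: either affine or a TPS warp with l control centers C (columns)
   and regularization parameter lambda. *)
Variant warp := Affine | TPS (l : nat) of 'M[R]_(d, l) & R.

Definition fdim (w : warp) : nat :=
  match w with Affine => (d + 1)%N | TPS l _ _ => l end.

Section TPSdefs.
Variables (l : nat) (C : 'M[R]_(d, l)) (lam : R).
Definition tps_K : 'M[R]_l :=
  \matrix_(j, k) if j == k then lam else tps_phi (vnorm (col j C - col k C)).
Definition tps_Ct : 'M[R]_(d + 1, l) := col_mx C (const_mx 1).
Definition tps_G : 'M[R]_(d + 1) := tps_Ct *m invmx tps_K *m tps_Ct^T.
Definition tps_Ebar : 'M[R]_l :=
  invmx tps_K - invmx tps_K *m tps_Ct^T *m invmx tps_G *m tps_Ct *m invmx tps_K.
Definition tps_E : 'M[R]_(l + (d + 1), l) :=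
  col_mx tps_Ebar (invmx tps_G *m tps_Ct *m invmx tps_K).
Definition tps_phivec (p : 'cV[R]_d) : 'cV[R]_l :=
  \col_j tps_phi (vnorm (p - col j C)).
Definition tps_beta (p : 'cV[R]_d) : 'cV[R]_l :=
  tps_E^T *m col_mx (tps_phivec p) (col_mx p (1 : 'cV[R]_1)).
End TPSdefs.

Definition beta (w : warp) (p : 'cV[R]_d) : 'cV[R]_(fdim w) :=
  match w return 'cV[R]_(fdim w) with
  | Affine => col_mx p (1 : 'cV[R]_1)
  | TPS l C lam => tps_beta C lam p
  end.

Definition Bmat (w : warp) (m : nat) (D : 'M[R]_(d, m)) : 'M[R]_(fdim w, m) :=
  \matrix_(k, j) beta w (col j D) k 0.

(* \bar E_lambda; the affine warp has no bending energy (taken as 0). *)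
Definition Ebar (w : warp) : 'M[R]_(fdim w) :=
  match w return 'M[R]_(fdim w) with
  | Affine => 0
  | TPS l C lam => tps_Ebar C lam
  end.

Definition warp_ok (w : warp) : Prop :=
  match w with
  | Affine => True
  | TPS l C lam => tps_K C lam \in unitmx /\ tps_G C lam \in unitmx
  end.

Definition psd_sqrt (k : nat) (Z E : 'M[R]_k) : Prop :=
  Z^T = Z /\ (forall x : 'cV[R]_k, 0 <= (x^T *m Z *m x) 0 0) /\ Z *m Z = E.

Definition warp_move (Rot : 'M[R]_d) (t : 'cV[R]_d) (w : warp) : warp :=
  match w with
  | Affine => Affine
  | TPS l C lam => TPS (Rot *m C + t *m const_mx 1) lam
  end.

Definition is_rotation (Rot : 'M[R]_d) : Prop :=
  Rot^T *m Rot = 1%:M /\ \det Rot = 1.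

Definition cost3 (n m : nat) (w : 'I_n -> warp) (D : 'I_n -> 'M[R]_(d, m))
  (Gam : 'I_n -> 'M[R]_m) (mu : 'I_n -> R) (Z : forall i, 'M[R]_(fdim (w i)))
  (nu : R) (W : forall i, 'M[R]_(fdim (w i), d)) (S : 'M[R]_(d, m)) : R :=
  \sum_(i < n) frob2 ((W i)^T *m Bmat (w i) (D i) *m Gam i - S *m Gam i)
  + \sum_(i < n) mu i * frob2 (Z i *m W i)
  + nu * frob2 (S *m const_mx 1 : 'cV[R]_d).

Definition optimal_S (n m : nat) (w : 'I_n -> warp) (D : 'I_n -> 'M[R]_(d, m))
  (Gam : 'I_n -> 'M[R]_m) (mu : 'I_n -> R) (Z : forall i, 'M[R]_(fdim (w i)))
  (Lam : 'M[R]_d) (nu : R) (S : 'M[R]_(d, m)) : Prop :=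
  S *m S^T = Lam /\
  exists W : forall i, 'M[R]_(fdim (w i), d),
    forall (W' : forall i, 'M[R]_(fdim (w i), d)) (S' : 'M[R]_(d, m)),
      S' *m S'^T = Lam ->
      cost3 D Gam mu Z nu W S <= cost3 D Gam mu Z nu W' S'.

End Defs.

(* Main.v *)
Require Import Defs.
From Stdlib Require Import FunctionalExtensionality.
From HB Require Import structures.
From mathcomp Require Import all_boot all_order all_algebra.
From mathcomp Require Import reals exp.
Import Order.TTheory GRing.Theory Num.Theory.
Local Open Scope ring_scope.
Set Implicit Arguments. Unset Strict Implicit. Unset Printing Implicit Defensive.

Section Helpers.
Variable R : realType.

Lemma invmxM_sq (k : nat) (A B : 'M[R]_k) : A \in unitmx -> B \in unitmx ->
  invmx (A *m B) = invmx B *m invmx A.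
Proof.
move=> uA uB.
have uAB : A *m B \in unitmx by rewrite unitmx_mul uA uB.
have h : (A *m B) *m (invmx B *m invmx A) = 1%:M.
  by rewrite mulmxA -(mulmxA A) mulmxV // mulmx1 mulmxV.
by rewrite -[LHS]mulmx1 -h mulmxA mulVmx // mul1mx.
Qed.

Lemma frob2_tr (p q : nat) (X : 'M[R]_(p, q)) : frob2 X = \tr (X^T *m X).
Proof.
rewrite /frob2 /mxtrace exchange_big /=; apply: eq_bigr => j _.
rewrite mxE; apply: eq_bigr => i _; by rewrite !mxE expr2.
Qed.

Lemma frob2_mul (k p q : nat) (A A' : 'M[R]_(k, p)) (W : 'M[R]_(p, q)) :
  A^T *m A = A'^T *m A' -> frob2 (A *m W) = frob2 (A' *m W).
Proof.
move=> h; rewrite !frob2_tr !trmx_mul.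
by rewrite -!mulmxA (mulmxA A^T) (mulmxA A'^T) h.
Qed.

Variable d : nat.

Lemma sumsq (v : 'cV[R]_d) : \sum_(k < d) v k 0 ^+ 2 = (v^T *m v) 0 0.
Proof. rewrite mxE; apply: eq_bigr => k _; by rewrite !mxE expr2. Qed.

Lemma vnorm_rot (Rot : 'M[R]_d) (v : 'cV[R]_d) : Rot^T *m Rot = 1%:M ->
  vnorm (Rot *m v) = vnorm v.
Proof.
move=> h; rewrite /vnorm !sumsq trmx_mul -mulmxA (mulmxA Rot^T) h mul1mx //.
Qed.

Lemma col_move (l : nat) (Rot : 'M[R]_d) (t : 'cV[R]_d) (C : 'M[R]_(d, l)) j :
  col j (Rot *m C + t *m const_mx 1) = Rot *m col j C + t.
Proof.
apply/matrixP => a b; rewrite !mxE big_ord1 !mxE mulr1; congr (_ + _).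
  by apply: eq_bigr => r _; rewrite !mxE.
by rewrite (ord1 b).
Qed.

Definition Mmx (Rot : 'M[R]_d) (t : 'cV[R]_d) : 'M[R]_(d + 1) :=
  block_mx Rot t 0 1%:M.

Lemma Mmx_unit Rot t : is_rotation Rot -> Mmx Rot t \in unitmx.
Proof.
case=> _ hdet; rewrite unitmxE /Mmx det_ublock hdet det1 mulr1 unitr1 //.
Qed.

Lemma Mmx_col (Rot : 'M[R]_d) (t : 'cV[R]_d) (p : 'cV[R]_d) :
  col_mx (Rot *m p + t) (1 : 'cV[R]_1) = Mmx Rot t *m col_mx p 1.
Proof.
by rewrite /Mmx mul_block_col mulmx1 mul0mx add0r mul1mx.
Qed.

Lemma Bmat_col (w : warp R d) (m : nat) (D : 'M[R]_(d, m)) j :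
  col j (Bmat w D) = beta w (col j D).
Proof. apply/matrixP => k z; by rewrite !mxE (ord1 z). Qed.

Lemma mx_colP (p q : nat) (A B : 'M[R]_(p, q)) :
  (forall j, col j A = col j B) -> A = B.
Proof.
move=> h; apply/matrixP => k j; have := congr1 (fun X : 'M[R]_(p, 1) => X k 0) (h j).
by rewrite !mxE.
Qed.

Section TPS.
Variables (l : nat) (C : 'M[R]_(d, l)) (lam : R) (Rot : 'M[R]_d) (t : 'cV[R]_d).
Hypothesis hrot : is_rotation Rot.
Let C' := Rot *m C + t *m const_mx 1.
Local Notation M := (Mmx Rot t).

Lemma tpsK_move : tps_K C' lam = tps_K C lam.
Proof.
apply/matrixP => j k; rewrite !mxE; case: eqP => // _; congr tps_phi.
rewrite /C' !col_move opprD addrACA subrr addr0 -mulmxBr vnorm_rot //.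
by case: hrot.
Qed.

Lemma tpsCt_move : tps_Ct C' = M *m tps_Ct C.
Proof.
by rewrite /tps_Ct /Mmx mul_block_col mul0mx add0r mul1mx.
Qed.

Hypotheses (uK : tps_K C lam \in unitmx) (uG : tps_G C lam \in unitmx).

Lemma tpsG_move : tps_G C' lam = M *m tps_G C lam *m M^T.
Proof.
by rewrite /tps_G tpsK_move tpsCt_move trmx_mul !mulmxA.
Qed.

Lemma uM : M \in unitmx. Proof. exact: Mmx_unit. Qed.

Lemma invG_move : invmx (tps_G C' lam) = invmx M^T *m invmx (tps_G C lam) *m invmx M.
Proof.
have uMt : M^T \in unitmx by rewrite unitmx_tr; exact: uM.
have uM' := uM.
rewrite tpsG_move invmxM_sq //; last by rewrite unitmx_mul uG andbT.
by rewrite invmxM_sq // mulmxA.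
Qed.

Lemma tpsEbar_move : tps_Ebar C' lam = tps_Ebar C lam.
Proof.
have uMt : M^T \in unitmx by rewrite unitmx_tr; exact: uM.
rewrite /tps_Ebar invG_move tpsK_move tpsCt_move trmx_mul.
congr (_ - _).
rewrite !mulmxA mulmxK // mulmxKV //; exact: uM.
Qed.

Lemma tpsX_move : invmx (tps_G C' lam) *m tps_Ct C' *m invmx (tps_K C' lam)
  = invmx M^T *m (invmx (tps_G C lam) *m tps_Ct C *m invmx (tps_K C lam)).
Proof.
rewrite invG_move tpsK_move tpsCt_move !mulmxA.
by rewrite mulmxKV //; exact: uM.
Qed.

Lemma tpsphi_move (p : 'cV[R]_d) : tps_phivec C' (Rot *m p + t) = tps_phivec C p.
Proof.
apply/matrixP => j z; rewrite !mxE; congr tps_phi.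
rewrite /C' col_move opprD addrACA subrr addr0 -mulmxBr vnorm_rot //.
by case: hrot.
Qed.

Lemma tpsbeta_move (p : 'cV[R]_d) :
  tps_beta C' lam (Rot *m p + t) = tps_beta C lam p.
Proof.
rewrite /tps_beta /tps_E tpsEbar_move tpsX_move tpsphi_move Mmx_col.
set X := invmx (tps_G C lam) *m _ *m _.
have uN : Mmx Rot t \in unitmx by exact: uM.
rewrite (tr_col_mx (tps_Ebar C lam)) (tr_col_mx (tps_Ebar C lam)) !mul_row_col; congr (_ + _).
rewrite trmx_mul trmx_inv trmxK.
rewrite -!mulmxA; congr (_ *m _).
by rewrite mulmxA mulVmx ?mul1mx.
Qed.
End TPS.

Lemma per_warp (m : nat) (w : warp R d) (Rot : 'M[R]_d) (t : 'cV[R]_d)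
  (D : 'M[R]_(d, m)) (mu : R) (Z : 'M[R]_(fdim w))
  (Z' : 'M[R]_(fdim (warp_move Rot t w))) :
  is_rotation Rot -> warp_ok w -> (w = Affine R d -> mu = 0) ->
  psd_sqrt Z (Ebar w) -> psd_sqrt Z' (Ebar (warp_move Rot t w)) ->
  { f : 'M[R]_(fdim (warp_move Rot t w), d) -> 'M[R]_(fdim w, d) &
   { g : 'M[R]_(fdim w, d) -> 'M[R]_(fdim (warp_move Rot t w), d) |
     (forall W, f (g W) = W) /\
     forall W', (f W')^T *m Bmat w D
                = W'^T *m Bmat (warp_move Rot t w) (Rot *m D + t *m const_mx 1) /\
      mu * frob2 (Z *m f W') = mu * frob2 (Z' *m W') } }.
Proof.
move=> hrot.
destruct w as [|l C lam] => /= hok hmu hZ hZ'.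
- have uMt : (Mmx Rot t)^T \in unitmx by rewrite unitmx_tr Mmx_unit.
  exists (fun W' => (Mmx Rot t)^T *m W').
  exists (fun W => invmx (Mmx Rot t)^T *m W).
  split; first by move=> W; rewrite mulKVmx.
  move=> W'; rewrite hmu // !mul0r; split => //.
  rewrite trmx_mul trmxK -mulmxA; congr (_ *m _).
  apply: mx_colP => j. rewrite colE -mulmxA -colE. rewrite (Bmat_col (Affine R d) D j).
  rewrite (Bmat_col (Affine R d) _ j) /= col_move Mmx_col //.
- case: hok => uK uG.
  exists id; exists id; split => // W'; split.
    congr (_ *m _); apply: mx_colP => j.
    rewrite (Bmat_col (TPS C lam) D j) (Bmat_col (TPS _ lam) _ j) /= col_move.
    by rewrite tpsbeta_move.
  congr (_ * _); apply: frob2_mul.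
  case: hZ => [hT [_ hE]]; case: hZ' => [hT' [_ hE']].
  by rewrite hT hT' hE hE' /= tpsEbar_move.
Qed.

End Helpers.

Theorem proposition10 (R : realType) (d n m : nat) (hd : d = 2%N \/ d = 3%N)
  (w : 'I_n -> warp R d) (D : 'I_n -> 'M[R]_(d, m)) (Gam : 'I_n -> 'M[R]_m)
  (mu : 'I_n -> R) (Z : forall i, 'M[R]_(fdim (w i)))
  (Lam : 'M[R]_d) (nu : R)
  (Rot : 'I_n -> 'M[R]_d) (t : 'I_n -> 'cV[R]_d)
  (Z' : forall i, 'M[R]_(fdim (warp_move (Rot i) (t i) (w i))))
  (hLam : is_diag_mx Lam) (hnu : 0 <= nu)
  (hGam : forall i, is_diag_mx (Gam i) /\ forall j, Gam i j j = 0 \/ Gam i j j = 1)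
  (hmu : forall i, (w i = Affine R d -> mu i = 0) /\ 0 <= mu i)
  (hok : forall i, warp_ok (w i))
  (hZ : forall i, psd_sqrt (Z i) (Ebar (w i)))
  (hZ' : forall i, psd_sqrt (Z' i) (Ebar (warp_move (Rot i) (t i) (w i))))
  (hinv : forall i,
     Bmat (w i) (D i) *m Gam i *m Gam i *m (Bmat (w i) (D i))^T
     + mu i *: ((Z i)^T *m Z i) \in unitmx)
  (hrot : forall i, is_rotation (Rot i)) :
  forall S : 'M[R]_(d, m),
    optimal_S D Gam mu Z Lam nu S <->
    optimal_S (fun i => Rot i *m D i + t i *m const_mx 1) Gam mu Z' Lam nu S.
Proof.
pose P i := @per_warp R d m (w i) (Rot i) (t i) (D i) (mu i) (Z i) (Z' i) (hrot i) (hok i) (proj1 (hmu i)) (hZ i) (hZ' i).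
pose F (W' : forall i, 'M[R]_(fdim (warp_move (Rot i) (t i) (w i)), d)) :=
  fun i => projT1 (P i) (W' i).
pose G (W : forall i, 'M[R]_(fdim (w i), d)) :=
  fun i => proj1_sig (projT2 (P i)) (W i).
have FG : forall W, F (G W) = W.
  move=> W; apply: functional_extensionality_dep => i.
  by rewrite /F /G; case: (proj2_sig (projT2 (P i))) => h _; rewrite h.
have cF : forall W' S, cost3 (fun i => Rot i *m D i + t i *m const_mx 1) Gam mu Z' nu W' S
                    = cost3 D Gam mu Z nu (F W') S.
  move=> W' S; rewrite /cost3; congr (_ + _ + _).
    apply: eq_bigr => i _; rewrite /F.
    by case: (proj2_sig (projT2 (P i))) => _ /(_ (W' i)) [-> _].
  apply: eq_bigr => i _; rewrite /F.
  by case: (proj2_sig (projT2 (P i))) => _ /(_ (W' i)) [_ ->].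
move=> S; split; case=> hS [W hW]; split => //.
- exists (G W) => W'' S' hS'; rewrite !cF FG; exact: hW.
- exists (F W) => W'' S' hS'; rewrite -cF -(FG W'') -cF; exact: hW.
Qed.
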